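(* Consider an anode solution with active-layer boundary $-h_a\in(-h_3,-h_1)$ in the classical formulation, i.e. with $\eta=s_a$, and assume $j_{\mathrm{cell}}>0$. Then there exists $\varepsilon>0$ such that $\eta(y)<0$ for all $y\in(-h_a,-h_a+\varepsilon)$. Consequently the anodic charge-transfer current is negative on $(-h_a,-h_a+\varepsilon)$.
   Context: Anode model (isothermal, 1D). Fix real numbers $0<h_1<h_a<h_3$ and positive constants $\sigma_{\mathrm{el}},\sigma_{\mathrm{ion}}$ (effective conductivities), $\rho_f$ (fuel density), $D_1$ (effective diffusion coefficient), $M_{H_2}$ and $M_{H_2O}$ (molar masses), $F,R,T$ (Faraday constant, gas constant, temperature) and $l>0$. Also fix $j_{\mathrm{cell}}>0$, $V_3\in\mathbb R$ and bulk mass fractions $C_{H_2}^{\mathrm{bulk}},C_{H_2O}^{\mathrm{bulk}}\in(0,1)$. Define the signed quantity $$s_a=\phi_{\mathrm{el}}-\phi_{\mathrm{ion}}-\frac{RT}{2F}\ln\Big(\frac{C_{H_2}^{\mathrm{bulk}}}{C_{H_2}}\cdot\frac{C_{H_2O}}{C_{H_2O}^{\mathrm{bulk}}}\Big).$$ The activation overpotential is $\eta=s_a$ in the classical formulation and $\eta=|s_a|$ in the modified formulation. Charge-transfer current. For $y\in(-h_a,-h_1)$ set $$i=l\,i_0\Big[\exp\Big(\frac{2F\eta}{RT}\Big)-\exp\Big(-\frac{F\eta}{RT}\Big)\Big],\qquad i_0=32.4\,p_{H_2}^{-0.03}p_{H_2O}^{0.4}e^{-152155/(RT)},$$ where $p_{H_2}=\rho_fRTC_{H_2}/M_{H_2}$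 and $p_{H_2O}=\rho_fRTC_{H_2O}/M_{H_2O}$. An anode solution with active-layer boundary $-h_a$ is a tuple $\phi_{\mathrm{el}},\phi_{\mathrm{ion}},C_{H_2},C_{H_2O}\in C^1([-h_3,-h_1])$ with the following properties. - Regularity: each function is $C^2$ on $[-h_3,-h_a]$ and on $[-h_a,-h_1]$, and $C_{H_2},C_{H_2O}>0$. - Equations on $(-h_a,-h_1)$: $(\sigma_{\mathrm{el}}\phi_{\mathrm{el}}')'=i$, $(\sigma_{\mathrm{ion}}\phi_{\mathrm{ion}}')'=-i$, $(\rho_fD_1C_{H_2}')'=\frac{M_{H_2}}{2F}i$ and $(\rho_fD_1C_{H_2O}')'=-\frac{M_{H_2O}}{2F}i$. - Equations on $(-h_3,-h_a)$: all four left-hand sides vanish. - Boundary conditions at $-h_3$: $-\sigma_{\mathrm{el}}\phi_{\mathrm{el}}'(-h_3)=j_{\mathrm{cell}}$, $\phi_{\mathrm{ion}}'(-h_3)=0$, $\phi_{\mathrm{el}}(-h_3)=V_3$, $C_{H_2}(-h_3)=C_{H_2}^{\mathrm{bulk}}$, $C_{H_2O}(-h_3)=C_{H_2O}^{\mathrm{bulk}}$. - Boundary conditions at $-h_1$: $\phi_{\mathrm{el}}'(-h_1)=0$, $-\sigma_{\mathrm{ion}}\phi_{\mathrm{ion}}'(-h_1)=j_{\mathrm{cell}}$, $C_{H_2}'(-h_1)=C_{H_2O}'(-h_1)=0$. - Interface condition: $s_a(-h_a)=0$. *)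

(* Defs.v *)
From Stdlib Require Import Reals Lra.
Open Scope R_scope.

Definition deriv_on (f f' : R -> R) (a b : R) : Prop :=
  forall x, a <= x <= b -> forall eps, 0 < eps ->
    exists delta, 0 < delta /\
      forall y, a <= y <= b -> y <> x -> Rabs (y - x) < delta ->
        Rabs ((f y - f x) / (y - x) - f' x) < eps.

Definition cont_on (f : R -> R) (a b : R) : Prop :=
  forall x, a <= x <= b -> forall eps, 0 < eps ->
    exists delta, 0 < delta /\
      forall y, a <= y <= b -> Rabs (y - x) < delta -> Rabs (f y - f x) < eps.

(* u (with first derivative du on [a,b]) is C^2 on [a,b] and satisfies
   (c u')' = g on (a,b). *)
Definition piece_eq (du : R -> R) (a b c : R) (g : R -> R) : Prop :=
  exists d2, deriv_on du d2 a b /\ cont_on d2 a b /\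
    forall y, a < y < b -> c * d2 y = g y.

Definition i0 (rhof Rg T MH2 MH2O cH2 cH2O : R) : R :=
  let pH2 := rhof * Rg * T * cH2 / MH2 in
  let pH2O := rhof * Rg * T * cH2O / MH2O in
  (324 / 10) * Rpower pH2 (- (3 / 100)) * Rpower pH2O (4 / 10)
    * exp (- (152155 / (Rg * T))).

Definition s_a (F Rg T CbH2 CbH2O : R) (pel pion cH2 cH2O : R -> R) (y : R) : R :=
  pel y - pion y
  - Rg * T / (2 * F) * ln (CbH2 / cH2 y * (cH2O y / CbH2O)).

Definition icur (rhof MH2 MH2O F Rg T l CbH2 CbH2O : R)
    (pel pion cH2 cH2O : R -> R) (y : R) : R :=
  let eta := s_a F Rg T CbH2 CbH2O pel pion cH2 cH2O y in
  l * i0 rhof Rg T MH2 MH2O (cH2 y) (cH2O y)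
    * (exp (2 * F * eta / (Rg * T)) - exp (- (F * eta / (Rg * T)))).

Definition anode_solution
    (h1 ha h3 sel sion rhof D1 MH2 MH2O F Rg T l jcell V3 CbH2 CbH2O : R)
    (pel pion cH2 cH2O : R -> R) : Prop :=
  let i := icur rhof MH2 MH2O F Rg T l CbH2 CbH2O pel pion cH2 cH2O in
  exists dpel dpion dcH2 dcH2O : R -> R,
    deriv_on pel dpel (-h3) (-h1) /\ cont_on dpel (-h3) (-h1) /\
    deriv_on pion dpion (-h3) (-h1) /\ cont_on dpion (-h3) (-h1) /\
    deriv_on cH2 dcH2 (-h3) (-h1) /\ cont_on dcH2 (-h3) (-h1) /\
    deriv_on cH2O dcH2O (-h3) (-h1) /\ cont_on dcH2O (-h3) (-h1) /\
    (forall y, -h3 <= y <= -h1 -> 0 < cH2 y /\ 0 < cH2O y) /\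
    piece_eq dpel (-h3) (-ha) sel (fun _ => 0) /\
    piece_eq dpion (-h3) (-ha) sion (fun _ => 0) /\
    piece_eq dcH2 (-h3) (-ha) (rhof * D1) (fun _ => 0) /\
    piece_eq dcH2O (-h3) (-ha) (rhof * D1) (fun _ => 0) /\
    piece_eq dpel (-ha) (-h1) sel i /\
    piece_eq dpion (-ha) (-h1) sion (fun y => - i y) /\
    piece_eq dcH2 (-ha) (-h1) (rhof * D1) (fun y => MH2 / (2 * F) * i y) /\
    piece_eq dcH2O (-ha) (-h1) (rhof * D1) (fun y => - (MH2O / (2 * F) * i y)) /\
    - sel * dpel (-h3) = jcell /\ dpion (-h3) = 0 /\ pel (-h3) = V3 /\
    cH2 (-h3) = CbH2 /\ cH2O (-h3) = CbH2O /\
    dpel (-h1) = 0 /\ - sion * dpion (-h1) = jcell /\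
    dcH2 (-h1) = 0 /\ dcH2O (-h1) = 0 /\
    s_a F Rg T CbH2 CbH2O pel pion cH2 cH2O (-ha) = 0.

(* Main.v *)
Require Import Defs.
From Stdlib Require Import Reals.
From Stdlib Require Import Lra Psatz.
Open Scope R_scope.

Definition cw (f : R -> R) (a b x : R) : Prop :=
  forall eps, 0 < eps -> exists d, 0 < d /\
    forall y, a <= y <= b -> Rabs (y - x) < d -> Rabs (f y - f x) < eps.

Lemma deriv_int f f' a b x : deriv_on f f' a b -> a < x < b ->
  derivable_pt_lim f x (f' x).
Proof.
  intros H Hx eps Heps.
  destruct (H x (conj (Rlt_le _ _ (proj1 Hx)) (Rlt_le _ _ (proj2 Hx))) eps Heps)
    as [d [Hd Hy]].
  assert (Hm: 0 < Rmin d (Rmin (x-a) (b-x))) by (repeat apply Rmin_pos; lra).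
  exists (mkposreal _ Hm). intros h Hh Hha. simpl in Hha.
  assert (h1: Rabs h < d) by (eapply Rlt_le_trans; [exact Hha| apply Rmin_l]).
  assert (h2: Rabs h < x - a).
  { eapply Rlt_le_trans; [exact Hha|]. eapply Rle_trans; [apply Rmin_r|apply Rmin_l]. }
  assert (h3: Rabs h < b - x).
  { eapply Rlt_le_trans; [exact Hha|]. eapply Rle_trans; [apply Rmin_r|apply Rmin_r]. }
  apply Rabs_def2 in h2. apply Rabs_def2 in h3.
  specialize (Hy (x+h)). replace (x+h-x) with h in Hy by ring.
  apply Hy; try lra.
Qed.

Lemma deriv_cw f f' a b x : deriv_on f f' a b -> a <= x <= b -> cw f a b x.
Proof.
  intros H Hx eps He. destruct (H x Hx 1 Rlt_0_1) as [d [Hd Hy]].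
  set (M := Rabs (f' x) + 1).
  assert (HM : 0 < M) by (unfold M; pose proof (Rabs_pos (f' x)); lra).
  assert (Hm: 0 < Rmin d (eps / M)) by (apply Rmin_pos; [lra| apply Rdiv_lt_0_compat; lra]).
  exists (Rmin d (eps/M)). split; [exact Hm|]. intros y Hya Hyx.
  destruct (Req_dec y x) as [E|E].
  { subst y. replace (f x - f x) with 0 by ring. rewrite Rabs_R0. lra. }
  assert (Hyd : Rabs (y - x) < d) by (eapply Rlt_le_trans; [exact Hyx|apply Rmin_l]).
  assert (Hye : Rabs (y - x) < eps / M) by (eapply Rlt_le_trans; [exact Hyx|apply Rmin_r]).
  specialize (Hy y Hya E Hyd).
  set (q := (f y - f x) / (y - x)) in *.
  assert (Eq: f y - f x = q * (y - x)) by (unfold q; field; lra).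
  rewrite Eq, Rabs_mult.
  assert (Hq : Rabs q < M).
  { unfold M. replace q with ((q - f' x) + f' x) by ring.
    pose proof (Rabs_triang (q - f' x) (f' x)). lra. }
  assert (Hp : 0 < Rabs (y - x)) by (apply Rabs_pos_lt; lra).
  apply Rle_lt_trans with (M * Rabs (y - x)).
  { apply Rmult_le_compat_r; lra. }
  replace eps with (M * (eps / M)) by (field; lra).
  apply Rmult_lt_compat_l; lra.
Qed.

Lemma cw_lin f g al be a b x : cw f a b x -> cw g a b x ->
  cw (fun y => al * f y + be * g y) a b x.
Proof.
  intros Hf Hg eps He.
  set (S := Rabs al + Rabs be + 1).
  assert (HS : 0 < S) by (unfold S; pose proof (Rabs_pos al); pose proof (Rabs_pos be); lra).
  set (e := eps / (2 * S)).
  assert (He' : 0 < e) by (unfold e; apply Rdiv_lt_0_compat; lra).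
  destruct (Hf e He') as [d1 [Hd1 H1]]. destruct (Hg e He') as [d2 [Hd2 H2]].
  exists (Rmin d1 d2). split; [apply Rmin_pos; lra|]. intros y Hy Hyx.
  assert (u : Rabs (f y - f x) < e) by (apply H1; [exact Hy| eapply Rlt_le_trans; [exact Hyx|apply Rmin_l]]).
  assert (v : Rabs (g y - g x) < e) by (apply H2; [exact Hy| eapply Rlt_le_trans; [exact Hyx|apply Rmin_r]]).
  replace (al * f y + be * g y - (al * f x + be * g x)) with
    (al * (f y - f x) + be * (g y - g x)) by ring.
  eapply Rle_lt_trans; [apply Rabs_triang|]. rewrite !Rabs_mult.
  assert (E : e * S = eps / 2) by (unfold e; field; lra).
  pose proof (Rabs_pos al); pose proof (Rabs_pos be).
  pose proof (Rabs_pos (f y - f x)); pose proof (Rabs_pos (g y - g x)).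
  unfold S in E. nra.
Qed.

Lemma const_core h a b : a < b ->
  (forall x, a < x < b -> derivable_pt_lim h x 0) ->
  cw h a b a -> cw h a b b -> h a = h b.
Proof.
  intros Hab Hd Ca Cb.
  assert (Hin : forall x y, a < x -> x < y -> y < b -> h x = h y).
  { intros x y Hx Hxy Hy.
    destruct (MVT_cor2 h (fun _ => 0) x y Hxy) as [c [Hc _]].
    { intros c Hc. apply Hd. lra. }
    lra. }
  destruct (Req_dec (h a) (h b)) as [E|E]; [exact E|exfalso].
  set (eps := Rabs (h a - h b) / 2).
  assert (He : 0 < eps) by (unfold eps; assert (0 < Rabs (h a - h b)) by (apply Rabs_pos_lt; lra); lra).
  destruct (Ca eps He) as [d1 [Hd1 H1]]. destruct (Cb eps He) as [d2 [Hd2 H2]].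
  set (r1 := Rmin d1 ((b - a)/2)). set (r2 := Rmin d2 ((b - a)/2)).
  assert (r1p : 0 < r1) by (unfold r1; apply Rmin_pos; lra).
  assert (r2p : 0 < r2) by (unfold r2; apply Rmin_pos; lra).
  assert (r1a : r1 <= d1) by apply Rmin_l. assert (r1b : r1 <= (b-a)/2) by apply Rmin_r.
  assert (r2a : r2 <= d2) by apply Rmin_l. assert (r2b : r2 <= (b-a)/2) by apply Rmin_r.
  assert (Exy : h (a + r1/2) = h (b - r2/2)) by (apply Hin; lra).
  assert (A1 : Rabs (h (a + r1/2) - h a) < eps).
  { apply H1; [lra|]. replace (a + r1/2 - a) with (r1/2) by ring. rewrite Rabs_right; lra. }
  assert (A2 : Rabs (h (b - r2/2) - h b) < eps).
  { apply H2; [lra|]. replace (b - r2/2 - b) with (-(r2/2)) by ring.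
    rewrite Rabs_Ropp, Rabs_right; lra. }
  rewrite Exy in A1. unfold eps in *.
  pose proof (Rabs_triang (h a - h (b - r2/2)) (h (b - r2/2) - h b)).
  replace (h a - h (b - r2/2) + (h (b - r2/2) - h b)) with (h a - h b) in H by ring.
  rewrite <- Rabs_Ropp in A1. replace (- (h (b - r2 / 2) - h a)) with (h a - h (b - r2/2)) in A1 by ring.
  lra.
Qed.

Lemma comb f f1 g g1 al be a b : deriv_on f f1 a b -> deriv_on g g1 a b -> a < b ->
  (forall x, a < x < b -> al * f1 x + be * g1 x = 0) ->
  al * f a + be * g a = al * f b + be * g b.
Proof.
  intros Hf Hg Hab H0.
  apply (const_core (fun y => al * f y + be * g y) a b Hab).
  - intros x Hx. rewrite <- (H0 x Hx).
    pose proof (derivable_pt_lim_scal _ al _ _ (deriv_int _ _ _ _ _ Hf Hx)) as A.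
    pose proof (derivable_pt_lim_scal _ be _ _ (deriv_int _ _ _ _ _ Hg Hx)) as B.
    exact (derivable_pt_lim_plus _ _ _ _ _ A B).
  - apply cw_lin; eapply deriv_cw; eauto; lra.
  - apply cw_lin; eapply deriv_cw; eauto; lra.
Qed.

Lemma zero_left du a b c : a < b -> 0 < c -> piece_eq du a b c (fun _ => 0) -> du a = du b.
Proof.
  intros Hab Hc [d2 [Hd [_ Heq]]].
  pose proof (comb du d2 du d2 1 0 a b Hd Hd Hab) as K.
  assert (K' : 1 * du a + 0 * du a = 1 * du b + 0 * du b).
  { apply K. intros x Hx. specialize (Heq x Hx). simpl in Heq.
    assert (d2 x = 0) by nra. rewrite H; ring. }
  lra.
Qed.

Theorem mainTheorem3
  (h1 ha h3 sel sion rhof D1 MH2 MH2O F Rg T l jcell V3 CbH2 CbH2O : R)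
  (pel pion cH2 cH2O : R -> R) :
  0 < h1 -> h1 < ha -> ha < h3 ->
  0 < sel -> 0 < sion -> 0 < rhof -> 0 < D1 -> 0 < MH2 -> 0 < MH2O ->
  0 < F -> 0 < Rg -> 0 < T -> 0 < l ->
  0 < jcell ->
  0 < CbH2 < 1 -> 0 < CbH2O < 1 ->
  anode_solution h1 ha h3 sel sion rhof D1 MH2 MH2O F Rg T l jcell V3 CbH2 CbH2O
    pel pion cH2 cH2O ->
  exists eps, 0 < eps /\ -ha + eps <= -h1 /\
    forall y, -ha < y < -ha + eps ->
      s_a F Rg T CbH2 CbH2O pel pion cH2 cH2O y < 0 /\
      icur rhof MH2 MH2O F Rg T l CbH2 CbH2O pel pion cH2 cH2O y < 0.
Proof.
  intros Hh1 Hh1a Hha3 Hsel Hsion Hrhof HD1 HMH2 HMH2O HF HRg HT Hl Hj HCb1 HCb2 Hsol.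
  destruct Hsol as (dpel & dpion & dcH2 & dcH2O & Dpel & _ & Dpion & _ & DcH2 & _ & DcH2O & _ &
    Hpos & Lpel & Lpion & _ & _ & Rpel & Rpion & RcH2 & RcH2O &
    B1 & B2 & _ & _ & _ & B6 & _ & B8 & B9 & Hint).
  assert (Epel : dpel (-h3) = dpel (-ha)) by (apply (zero_left _ _ _ sel); auto; lra).
  assert (Epion : dpion (-h3) = dpion (-ha)) by (apply (zero_left _ _ _ sion); auto; lra).
  assert (Vpel : dpel (-ha) = - jcell / sel) by (rewrite <- Epel, <- B1; field; lra).
  assert (Vpion : dpion (-ha) = 0) by lra.
  destruct Rpel as [d2p [Dp [_ Ep]]].
  destruct RcH2 as [d2c [Dc [_ Ec]]].
  destruct RcH2O as [d2o [Do [_ Eo]]].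
  assert (K1 : rhof * D1 * dcH2 (-ha) + (- (MH2 / (2 * F) * sel)) * dpel (-ha)
             = rhof * D1 * dcH2 (-h1) + (- (MH2 / (2 * F) * sel)) * dpel (-h1)).
  { apply (comb _ d2c _ d2p); auto; try lra. intros x Hx.
    specialize (Ec x Hx). specialize (Ep x Hx). simpl in Ec, Ep.
    replace (rhof * D1 * d2c x + - (MH2 / (2 * F) * sel) * d2p x) with
      (rhof * D1 * d2c x - MH2 / (2 * F) * (sel * d2p x)) by ring.
    rewrite Ec, Ep. ring. }
  assert (K2 : rhof * D1 * dcH2O (-ha) + (MH2O / (2 * F) * sel) * dpel (-ha)
             = rhof * D1 * dcH2O (-h1) + (MH2O / (2 * F) * sel) * dpel (-h1)).
  { apply (comb _ d2o _ d2p); auto; try lra. intros x Hx.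
    specialize (Eo x Hx). specialize (Ep x Hx). simpl in Eo, Ep.
    replace (rhof * D1 * d2o x + (MH2O / (2 * F) * sel) * d2p x) with
      (rhof * D1 * d2o x + MH2O / (2 * F) * (sel * d2p x)) by ring.
    rewrite Eo, Ep. ring. }
  rewrite B6, B8, B9, Vpel in *.
  assert (P : 0 < rhof * D1) by nra.
  assert (E1 : -(MH2/(2*F)*sel)*(-jcell/sel) = MH2/(2*F)*jcell) by (field; lra).
  assert (E2 : (MH2O/(2*F)*sel)*(-jcell/sel) = -(MH2O/(2*F)*jcell)) by (field; lra).
  rewrite E1 in K1. rewrite E2 in K2.
  assert (Q1 : 0 < MH2 / (2*F) * jcell) by (apply Rmult_lt_0_compat; [apply Rdiv_lt_0_compat|]; lra).
  assert (Q2 : 0 < MH2O / (2*F) * jcell) by (apply Rmult_lt_0_compat; [apply Rdiv_lt_0_compat|]; lra).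
  assert (Sc : dcH2 (-ha) < 0) by nra.
  assert (So : 0 < dcH2O (-ha)) by nra.
  set (x0 := - ha) in *.
  assert (Ix : -h3 < x0 < -h1) by (unfold x0; lra).
  assert (Ix' : -h3 <= x0 <= -h1) by lra.
  destruct (Hpos x0 Ix') as [Pc Po].
  set (K := Rg * T / (2 * F)).
  assert (HK : 0 < K) by (unfold K; apply Rdiv_lt_0_compat; nra).
  pose proof (deriv_int _ _ _ _ _ Dpel Ix) as Gp.
  pose proof (deriv_int _ _ _ _ _ Dpion Ix) as Gi.
  pose proof (deriv_int _ _ _ _ _ DcH2 Ix) as Gc.
  pose proof (deriv_int _ _ _ _ _ DcH2O Ix) as Go.
  pose proof (derivable_pt_lim_div (fct_cte CbH2) cH2 x0 0 _ (derivable_pt_lim_const CbH2 x0) Gc ltac:(lra)) as GA.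
  pose proof (derivable_pt_lim_div cH2O (fct_cte CbH2O) x0 _ 0 Go (derivable_pt_lim_const CbH2O x0) ltac:(unfold fct_cte; lra)) as GB.
  pose proof (derivable_pt_lim_mult _ _ _ _ _ GA GB) as GQ.
  assert (Qp : 0 < (CbH2 / cH2 x0 * (cH2O x0 / CbH2O))).
  { apply Rmult_lt_0_compat; apply Rdiv_lt_0_compat; lra. }
  pose proof (derivable_pt_lim_comp _ ln _ _ _ GQ (derivable_pt_lim_ln _ Qp)) as GL.
  pose proof (derivable_pt_lim_scal _ K _ _ GL) as GK.
  pose proof (derivable_pt_lim_minus _ _ _ _ _ Gp Gi) as GPI.
  pose proof (derivable_pt_lim_minus _ _ _ _ _ GPI GK) as GS.
  set (Ln := dpel x0 - dpion x0 - K * (dcH2O x0 / cH2O x0 - dcH2 x0 / cH2 x0)).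
  assert (GS' : derivable_pt_lim (s_a F Rg T CbH2 CbH2O pel pion cH2 cH2O) x0 Ln).
  { match type of GS with derivable_pt_lim _ _ ?L => replace Ln with L end.
    - exact GS.
    - unfold Ln, fct_cte, mult_fct, div_fct. unfold Rsqr. field. lra. }
  assert (LnN : Ln < 0).
  { unfold Ln. rewrite Vpion.
    assert (0 < dcH2O x0 / cH2O x0) by (apply Rdiv_lt_0_compat; lra).
    assert (dcH2 x0 / cH2 x0 < 0) by (unfold Rdiv; assert (0 < / cH2 x0) by (apply Rinv_0_lt_compat; lra); nra).
    rewrite Vpel. assert (0 < jcell / sel) by (apply Rdiv_lt_0_compat; lra).
    unfold Rdiv in *. nra. }
  destruct (GS' (- Ln / 2) ltac:(lra)) as [dl Hdl].
  assert (Epos : 0 < Rmin dl (ha - h1)) by (apply Rmin_pos; [apply cond_pos|lra]).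
  exists (Rmin dl (ha - h1)). split; [exact Epos|]. split.
  { pose proof (Rmin_r dl (ha - h1)). unfold x0; lra. }
  intros y Hy.
  assert (Hsy : s_a F Rg T CbH2 CbH2O pel pion cH2 cH2O y < 0).
  { pose proof (Rmin_l dl (ha - h1)).
    specialize (Hdl (y - x0) ltac:(lra)).
    replace (x0 + (y - x0)) with y in Hdl by ring.
    rewrite Hint in Hdl.
    assert (Hdd : Rabs (y - x0) < dl) by (rewrite Rabs_right; lra).
    specialize (Hdl Hdd). apply Rabs_def2 in Hdl.
    set (sy := s_a F Rg T CbH2 CbH2O pel pion cH2 cH2O y) in *.
    assert (Hq : (sy - 0) / (y - x0) < 0) by lra.
    destruct (Rlt_or_le sy 0) as [Hn|Hn]; [exact Hn|].
    exfalso. assert (0 <= (sy - 0) / (y - x0)) by (unfold Rdiv; apply Rmult_le_pos; [lra| left; apply Rinv_0_lt_compat; lra]). lra. }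
  split; [exact Hsy|].
  unfold icur. set (sy := s_a F Rg T CbH2 CbH2O pel pion cH2 cH2O y) in *.
  assert (Hi0 : 0 < i0 rhof Rg T MH2 MH2O (cH2 y) (cH2O y)).
  { unfold i0, Rpower. simpl. repeat apply Rmult_lt_0_compat; try apply exp_pos; lra. }
  set (z := F * sy / (Rg * T)).
  assert (Hz : z < 0).
  { unfold z, Rdiv. assert (0 < / (Rg * T)) by (apply Rinv_0_lt_compat; nra).
    assert (F * sy < 0) by nra. nra. }
  replace (2 * F * sy / (Rg * T)) with (2 * z) by (unfold z; field; lra).
  assert (exp (2 * z) < exp (- z)) by (apply exp_increasing; lra).
  assert (0 < l * i0 rhof Rg T MH2 MH2O (cH2 y) (cH2O y)) by nra.
  unfold z in *. nra.
Qed.
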